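(* Let $1<A'<A<B$. There exists a constant $C>0$, depending only on $A,A',B$, such that the following holds: if $f\in(\mathscr{A}^{(B)})^n$ satisfies $\|f\|_B<C$, and $Y=X+f(X)$ (where $X=(X_1,\dots,X_n)$ is the tuple of generators) satisfies $\|Y\|_{A'}\le A$, then there exists $G\in(\mathscr{A}^{(A)})^n$ such that $X=G(Y)$ in $(\mathscr{A}^{(A')})^n$.
   Context: $\mathscr{A}=\mathbb{C}\langle X_1,\dots,X_n\rangle$ is the algebra of non-commutative polynomials. For a polynomial $P=\sum_q\lambda_q(P)q$ (sum over monomials $q$) and $A>1$, $\|P\|_A=\sum_q|\lambda_q(P)|A^{\deg q}$; $\mathscr{A}^{(A)}$ is the completion (Banach algebra of absolutely convergent non-commutative power series). For tuples, $\|G\|_A=\max_j\|G_j\|_A$. An element of $\mathscr{A}^{(A)}$ can be evaluated at any $n$-tuple of elements of a Banach algebra of norms at most $A$; in particular $G(Y)$ is defined in $\mathscr{A}^{(A')}$ when $\|Y_j\|_{A'}\le A$. *)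

(* Defs.v *)
From Stdlib Require Import Reals Lra List Arith.
Import ListNotations.
Open Scope R_scope.

Definition Cplx : Type := (R * R)%type.
Definition C0 : Cplx := (0, 0).
Definition C1 : Cplx := (1, 0).
Definition Cadd (a b : Cplx) : Cplx := (fst a + fst b, snd a + snd b).
Definition Csub (a b : Cplx) : Cplx := (fst a - fst b, snd a - snd b).
Definition Cmul (a b : Cplx) : Cplx :=
  (fst a * fst b - snd a * snd b, fst a * snd b + snd a * fst b).
Definition Cmod (a : Cplx) : R := sqrt (fst a * fst a + snd a * snd a).
Definition Csum (l : list Cplx) : Cplx := fold_right Cadd C0 l.

Definition Ccv (u : nat -> Cplx) (l : Cplx) : Prop :=
  Un_cv (fun k => Cmod (Csub (u k) l)) 0.

(** Non-commutative monomials in X_0..X_{n-1} are words (list nat) with letters < n.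
    A non-commutative formal power series is its coefficient function
    q |-> lambda_q(P); the series in A^(A) are supported on words in the n letters. *)
Definition ncseries : Type := list nat -> Cplx.

Fixpoint words (n k : nat) : list (list nat) :=
  match k with
  | O => [[]]
  | S k' => flat_map (fun i => map (cons i) (words n k')) (seq 0 n)
  end.

Definition supported (n : nat) (P : ncseries) : Prop :=
  forall w : list nat, ~ Forall (fun i => (i < n)%nat) w -> P w = C0.

(** Partial sums of ||P||_A = sum_q |lambda_q(P)| A^deg q, grouped by degree. *)
Definition deg_mass (n : nat) (P : ncseries) (k : nat) : R :=
  fold_right Rplus 0 (map (fun w => Cmod (P w)) (words n k)).

Definition norm_partial (n : nat) (A : R) (P : ncseries) (K : nat) : R :=
  sum_f_R0 (fun k => deg_mass n P k * A ^ k) K.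

(** ||P||_A <= c  (the norm is the supremum of the partial sums). *)
Definition norm_le (n : nat) (A : R) (P : ncseries) (c : R) : Prop :=
  forall K, norm_partial n A P K <= c.

Definition norm_lt (n : nat) (A : R) (P : ncseries) (c : R) : Prop :=
  exists c', c' < c /\ norm_le n A P c'.

Definition in_alg (n : nat) (A : R) (P : ncseries) : Prop :=
  supported n P /\ exists c, norm_le n A P c.

Definition sone : ncseries :=
  fun w => match w with [] => C1 | _ => C0 end.

Definition smul (P Q : ncseries) : ncseries :=
  fun w => Csum (map (fun i => Cmul (P (firstn i w)) (Q (skipn i w)))
                     (seq 0 (S (length w)))).

Definition Xgen (j : nat) : ncseries :=
  fun w => if list_eq_dec Nat.eq_dec w [j] then C1 else C0.

Definition sadd (P Q : ncseries) : ncseries := fun w => Cadd (P w) (Q w).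

Definition mono_eval (Y : nat -> ncseries) (q : list nat) : ncseries :=
  fold_right (fun i acc => smul (Y i) acc) sone q.

(** Coefficient at w of the degree-<=K partial sum of G(Y) = sum_q lambda_q(G) Y^q. *)
Definition eval_partial (n : nat) (G : ncseries) (Y : nat -> ncseries)
    (w : list nat) (K : nat) : Cplx :=
  Csum (map (fun k =>
          Csum (map (fun q => Cmul (G q) (mono_eval Y q w)) (words n k)))
        (seq 0 (S K))).

(* Main.v *)
Require Import Defs.
From Stdlib Require Import Reals List.
From Stdlib Require Import Lra Lia Arith Ring Field FunctionalExtensionality.
From Coquelicot Require Coquelicot.
Import ListNotations.
Open Scope R_scope.


Definition Copp (a : Cplx) : Cplx := (- fst a, - snd a).

Lemma Cring_theory : ring_theory Defs.C0 Defs.C1 Cadd Cmul Csub Copp (@eq Cplx).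
Proof.
  constructor; intros; unfold Cadd, Cmul, Csub, Copp, Defs.C0, Defs.C1;
  try (destruct x); try (destruct y); try (destruct z); simpl;
  f_equal; ring.
Qed.
Add Ring Cring : Cring_theory.

Lemma Cmod_eq (a : Cplx) : Cmod a = Coquelicot.Complex.Cmod a.
Proof. unfold Cmod, Coquelicot.Complex.Cmod. f_equal. simpl. ring. Qed.

Lemma Cmod_ge0 a : 0 <= Cmod a.
Proof. unfold Cmod. apply sqrt_pos. Qed.

Lemma Cmod_add a b : Cmod (Cadd a b) <= Cmod a + Cmod b.
Proof. rewrite !Cmod_eq. apply Coquelicot.Complex.Cmod_triangle. Qed.

Lemma Cmod_mul a b : Cmod (Cmul a b) = Cmod a * Cmod b.
Proof. rewrite !Cmod_eq. apply Coquelicot.Complex.Cmod_mult. Qed.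

Lemma Cmod_C0 : Cmod Defs.C0 = 0.
Proof. unfold Cmod, Defs.C0; simpl. replace (0*0+0*0) with 0 by ring. apply sqrt_0. Qed.

Lemma Cmod_C1 : Cmod Defs.C1 = 1.
Proof. unfold Cmod, Defs.C1; simpl. replace (1*1+0*0) with 1 by ring. apply sqrt_1. Qed.

Lemma Cmod_opp a : Cmod (Copp a) = Cmod a.
Proof. unfold Cmod, Copp; simpl. f_equal. ring. Qed.

Lemma Cmod_sub_sym a b : Cmod (Csub a b) = Cmod (Csub b a).
Proof. replace (Csub a b) with (Copp (Csub b a)) by ring. apply Cmod_opp. Qed.

Lemma Cmod_sub a b : Cmod (Csub a b) <= Cmod a + Cmod b.
Proof. replace (Csub a b) with (Cadd a (Copp b)) by ring.
  rewrite <- (Cmod_opp b). apply Cmod_add. Qed.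

Lemma Cmod_diff a b : Rabs (Cmod a - Cmod b) <= Cmod (Csub a b).
Proof.
  apply Rabs_le; split.
  - assert (Cmod b <= Cmod a + Cmod (Csub b a)).
    { replace b with (Cadd a (Csub b a)) at 1 by ring. apply Cmod_add. }
    rewrite Cmod_sub_sym in H. lra.
  - assert (Cmod a <= Cmod b + Cmod (Csub a b)).
    { replace a with (Cadd b (Csub a b)) at 1 by ring. apply Cmod_add. }
    lra.
Qed.

Lemma Cmod_fst a : Rabs (fst a) <= Cmod a.
Proof.
  unfold Cmod. rewrite <- sqrt_Rsqr_abs. apply sqrt_le_1_alt.
  unfold Rsqr. destruct a; simpl. nra.
Qed.
Lemma Cmod_snd a : Rabs (snd a) <= Cmod a.
Proof.
  unfold Cmod. rewrite <- sqrt_Rsqr_abs. apply sqrt_le_1_alt.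
  unfold Rsqr. destruct a; simpl. nra.
Qed.
Lemma Cmod_le_fs a : Cmod a <= Rabs (fst a) + Rabs (snd a).
Proof.
  unfold Cmod. destruct a as [x y]; simpl.
  apply Rsqr_incr_0_var.
  - rewrite Rsqr_sqrt by nra. unfold Rsqr.
    pose proof (Rabs_pos x); pose proof (Rabs_pos y).
    assert (x*x = Rabs x * Rabs x) by (rewrite <- Rabs_mult, Rabs_right; nra).
    assert (y*y = Rabs y * Rabs y) by (rewrite <- Rabs_mult, Rabs_right; nra).
    nra.
  - pose proof (Rabs_pos x); pose proof (Rabs_pos y). lra.
Qed.


Definition szero : ncseries := fun _ => Defs.C0.
Definition sscale (c : Cplx) (P : ncseries) : ncseries := fun w => Cmul c (P w).
Definition ssub (P Q : ncseries) : ncseries := fun w => Csub (P w) (Q w).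
Definition shift (a : nat) (P : ncseries) : ncseries := fun u => P (a :: u).

Fixpoint sumS (l : list nat) (F : nat -> ncseries) : ncseries :=
  match l with [] => szero | a :: l' => sadd (F a) (sumS l' F) end.

Lemma Csum_cons x l : Csum (x :: l) = Cadd x (Csum l).
Proof. reflexivity. Qed.

Lemma smul_nil P Q : smul P Q [] = Cmul (P []) (Q []).
Proof. unfold smul; simpl. ring. Qed.

Lemma smul_cons P Q a w :
  smul P Q (a :: w) = Cadd (Cmul (P []) (Q (a :: w))) (smul (shift a P) Q w).
Proof.
  unfold smul. simpl length.
  change (seq 0 (S (S (length w)))) with (0%nat :: seq 1 (S (length w)))%nat.
  rewrite <- seq_shift, map_cons, map_map. simpl. reflexivity.
Qed.

Ltac sext := let w := fresh "w" in apply functional_extensionality; intro w.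

Lemma shift_smul a P Q :
  shift a (smul P Q) = sadd (sscale (P []) (shift a Q)) (smul (shift a P) Q).
Proof. sext. unfold shift at 1. rewrite smul_cons. reflexivity. Qed.

Lemma shift_sadd a P Q : shift a (sadd P Q) = sadd (shift a P) (shift a Q).
Proof. reflexivity. Qed.
Lemma shift_ssub a P Q : shift a (ssub P Q) = ssub (shift a P) (shift a Q).
Proof. reflexivity. Qed.
Lemma shift_sscale a c P : shift a (sscale c P) = sscale c (shift a P).
Proof. reflexivity. Qed.
Lemma shift_szero a : shift a szero = szero.
Proof. reflexivity. Qed.
Lemma shift_sone a : shift a sone = szero.
Proof. reflexivity. Qed.
Lemma shift_sumS a l F : shift a (sumS l F) = sumS l (fun b => shift a (F b)).
Proof. induction l; simpl; auto. rewrite shift_sadd, IHl. reflexivity. Qed.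
Lemma shift_Xgen a j : shift a (Xgen j) = if Nat.eq_dec a j then sone else szero.
Proof.
  sext. unfold shift, Xgen, sone, szero.
  destruct (Nat.eq_dec a j); destruct (list_eq_dec Nat.eq_dec (a :: w) [j]);
    destruct w; try congruence; subst; auto.
Qed.

Lemma smul_addl P Q R : smul (sadd P Q) R = sadd (smul P R) (smul Q R).
Proof.
  sext. revert P Q. induction w; intros.
  - unfold sadd at 1. rewrite !smul_nil. unfold sadd. rewrite !smul_nil. ring.
  - rewrite smul_cons, shift_sadd, IHw. unfold sadd. rewrite !smul_cons. ring.
Qed.
Lemma smul_addr P Q R : smul P (sadd Q R) = sadd (smul P Q) (smul P R).
Proof.
  sext. revert P. induction w; intros.
  - unfold sadd at 1. rewrite !smul_nil. unfold sadd. rewrite !smul_nil. ring.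
  - rewrite smul_cons, IHw. unfold sadd. rewrite !smul_cons. ring.
Qed.
Lemma smul_scalel c P R : smul (sscale c P) R = sscale c (smul P R).
Proof.
  sext. revert P. induction w; intros.
  - unfold sscale at 1. rewrite !smul_nil. unfold sscale. rewrite !smul_nil. ring.
  - rewrite smul_cons, shift_sscale, IHw. unfold sscale. rewrite !smul_cons. ring.
Qed.
Lemma smul_scaler c P R : smul P (sscale c R) = sscale c (smul P R).
Proof.
  sext. revert P. induction w; intros.
  - unfold sscale at 1. rewrite !smul_nil. unfold sscale. rewrite !smul_nil. ring.
  - rewrite smul_cons, IHw. unfold sscale. rewrite !smul_cons. ring.
Qed.
Lemma smul_zerol R : smul szero R = szero.
Proof.
  sext. induction w.
  - rewrite smul_nil. unfold szero. ring.
  - rewrite smul_cons, shift_szero, IHw. unfold szero. ring.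
Qed.
Lemma smul_zeror P : smul P szero = szero.
Proof.
  sext. revert P; induction w; intros.
  - rewrite smul_nil. unfold szero. ring.
  - rewrite smul_cons, IHw. unfold szero. ring.
Qed.
Lemma smul_onel R : smul sone R = R.
Proof.
  sext. destruct w.
  - rewrite smul_nil. simpl. ring.
  - rewrite smul_cons, shift_sone, smul_zerol. simpl. unfold szero. ring.
Qed.
Lemma smul_oner P : smul P sone = P.
Proof.
  sext. revert P; induction w; intros.
  - rewrite smul_nil. simpl. ring.
  - rewrite smul_cons, IHw. simpl. unfold shift. ring.
Qed.
Lemma smul_assoc P Q R : smul (smul P Q) R = smul P (smul Q R).
Proof.
  sext. revert P Q. induction w; intros.
  - rewrite !smul_nil. ring.
  - rewrite smul_cons, shift_smul, smul_addl, smul_scalel. unfold sadd at 1.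
    rewrite IHw. rewrite smul_nil. rewrite (smul_cons P). rewrite (smul_cons Q).
    unfold sadd, sscale. ring.
Qed.
Lemma smul_subl P Q R : smul (ssub P Q) R = ssub (smul P R) (smul Q R).
Proof.
  replace (ssub P Q) with (sadd P (sscale (Copp Defs.C1) Q)).
  2:{ sext. unfold sadd, sscale, ssub. ring. }
  rewrite smul_addl, smul_scalel. sext. unfold sadd, sscale, ssub. ring.
Qed.
Lemma smul_subr P Q R : smul P (ssub Q R) = ssub (smul P Q) (smul P R).
Proof.
  replace (ssub Q R) with (sadd Q (sscale (Copp Defs.C1) R)).
  2:{ sext. unfold sadd, sscale, ssub. ring. }
  rewrite smul_addr, smul_scaler. sext. unfold sadd, sscale, ssub. ring.
Qed.
Lemma smul_sumSl l F R : smul (sumS l F) R = sumS l (fun a => smul (F a) R).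
Proof. induction l; simpl. apply smul_zerol. rewrite smul_addl, IHl. reflexivity. Qed.
Lemma smul_sumSr l F P : smul P (sumS l F) = sumS l (fun a => smul P (F a)).
Proof. induction l; simpl. apply smul_zeror. rewrite smul_addr, IHl. reflexivity. Qed.

Lemma sumS_ext l F G : (forall a, In a l -> F a = G a) -> sumS l F = sumS l G.
Proof.
  induction l; simpl; intros; auto. rewrite H by auto. rewrite IHl; auto.
Qed.
Lemma sumS_add l F G : sumS l (fun a => sadd (F a) (G a)) = sadd (sumS l F) (sumS l G).
Proof.
  induction l; simpl. sext; unfold sadd, szero; ring.
  rewrite IHl. sext; unfold sadd; ring.
Qed.
Lemma sumS_sub l F G : sumS l (fun a => ssub (F a) (G a)) = ssub (sumS l F) (sumS l G).
Proof.
  induction l; simpl. sext; unfold ssub, szero; ring.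
  rewrite IHl. sext; unfold ssub, sadd; ring.
Qed.
Lemma sumS_scale l c F : sumS l (fun a => sscale c (F a)) = sscale c (sumS l F).
Proof.
  induction l; simpl. sext; unfold sscale, szero; ring.
  rewrite IHl. sext; unfold sscale, sadd; ring.
Qed.
Lemma sumS_zero l : sumS l (fun _ => szero) = szero.
Proof. induction l; simpl; auto. rewrite IHl. sext; unfold sadd, szero; ring. Qed.

Lemma sumS_delta n j F : (j < n)%nat ->
  sumS (seq 0 n) (fun a => if Nat.eq_dec a j then F a else szero) = F j.
Proof.
  intros Hj.
  assert (forall l, NoDup l -> In j l ->
    sumS l (fun a => if Nat.eq_dec a j then F a else szero) = F j).
  { induction l; simpl; intros Hnd Hin. contradiction.
    inversion Hnd; subst. destruct (Nat.eq_dec a j).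
    - subst. rewrite sumS_ext with (G := fun _ => szero).
      + rewrite sumS_zero. sext; unfold sadd, szero; ring.
      + intros b Hb. destruct (Nat.eq_dec b j); subst; auto. contradiction.
    - destruct Hin. congruence. rewrite IHl; auto. sext; unfold sadd, szero; ring. }
  apply H. apply seq_NoDup. apply in_seq. lia.
Qed.

Lemma sadd_ssub_eq P Q : sadd P (ssub Q P) = Q.
Proof. sext. unfold sadd, ssub. ring. Qed.


Fixpoint sumR (l : list nat) (F : nat -> R) : R :=
  match l with [] => 0 | a :: l' => F a + sumR l' F end.

Lemma sumR_le l F G : (forall a, In a l -> F a <= G a) -> sumR l F <= sumR l G.
Proof. induction l; simpl; intros; [lra|]. pose proof (H a (or_introl eq_refl)).
  assert (sumR l F <= sumR l G) by (apply IHl; auto). lra. Qed.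
Lemma sumR_ext l F G : (forall a, In a l -> F a = G a) -> sumR l F = sumR l G.
Proof. induction l; simpl; intros; auto. rewrite H, IHl; auto. Qed.
Lemma sumR_nonneg l F : (forall a, In a l -> 0 <= F a) -> 0 <= sumR l F.
Proof. induction l; simpl; intros; [lra|]. pose proof (H a (or_introl eq_refl)).
  assert (0 <= sumR l F) by (apply IHl; auto). lra. Qed.
Lemma sumR_add l F G : sumR l (fun a => F a + G a) = sumR l F + sumR l G.
Proof. induction l; simpl; [lra|]. rewrite IHl. lra. Qed.
Lemma sumR_sub l F G : sumR l (fun a => F a - G a) = sumR l F - sumR l G.
Proof. induction l; simpl; [lra|]. rewrite IHl. lra. Qed.
Lemma sumR_scale l c F : sumR l (fun a => c * F a) = c * sumR l F.
Proof. induction l; simpl; [lra|]. rewrite IHl. lra. Qed.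
Lemma sumR_single l F a : In a l -> (forall b, In b l -> 0 <= F b) -> F a <= sumR l F.
Proof.
  induction l; simpl; intros Hin Hnn. contradiction.
  assert (0 <= sumR l F) by (apply sumR_nonneg; auto).
  destruct Hin. subst. lra.
  assert (F a <= sumR l F) by (apply IHl; auto). pose proof (Hnn a0 (or_introl eq_refl)). lra.
Qed.
Lemma sumR_delta n j F : (j < n)%nat ->
  sumR (seq 0 n) (fun a => if Nat.eq_dec a j then F a else 0) = F j.
Proof.
  intros Hj.
  assert (forall l, NoDup l -> In j l ->
    sumR l (fun a => if Nat.eq_dec a j then F a else 0) = F j).
  { induction l; simpl; intros Hnd Hin. contradiction.
    inversion Hnd; subst. destruct (Nat.eq_dec a j).
    - subst. rewrite sumR_ext with (G := fun _ => 0).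
      + assert (forall l, sumR l (fun _ => 0) = 0) by (induction l0; simpl; lra).
        rewrite H. lra.
      + intros b Hb. destruct (Nat.eq_dec b j); subst; auto. contradiction.
    - destruct Hin. congruence. rewrite IHl; auto. lra. }
  apply H. apply seq_NoDup. apply in_seq. lia.
Qed.

Section N.
Variable n : nat.

Fixpoint Nrm (r : R) (K : nat) (P : ncseries) : R :=
  match K with
  | O => Cmod (P [])
  | S K' => Cmod (P []) + r * sumR (seq 0 n) (fun a => Nrm r K' (shift a P))
  end.

Lemma Nrm_nonneg r K P : 0 <= r -> 0 <= Nrm r K P.
Proof.
  revert P; induction K; intros; simpl. apply Cmod_ge0.
  pose proof (Cmod_ge0 (P [])).
  assert (0 <= sumR (seq 0 n) (fun a => Nrm r K (shift a P))) by
    (apply sumR_nonneg; intros; auto).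
  nra.
Qed.

Lemma Nrm_head r K P : 0 <= r -> Cmod (P []) <= Nrm r K P.
Proof.
  destruct K; simpl; intros. lra.
  assert (0 <= sumR (seq 0 n) (fun a => Nrm r K (shift a P))) by
    (apply sumR_nonneg; intros; apply Nrm_nonneg; auto). nra.
Qed.

Lemma Nrm_add r K P Q : 0 <= r -> Nrm r K (sadd P Q) <= Nrm r K P + Nrm r K Q.
Proof.
  intro Hr. revert P Q; induction K; intros; simpl; unfold sadd at 1.
  apply Cmod_add.
  pose proof (Cmod_add (P []) (Q [])).
  assert (sumR (seq 0 n) (fun a => Nrm r K (shift a (sadd P Q))) <=
          sumR (seq 0 n) (fun a => Nrm r K (shift a P)) + sumR (seq 0 n) (fun a => Nrm r K (shift a Q))).
  { rewrite <- sumR_add. apply sumR_le. intros. rewrite shift_sadd. apply IHK. }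
  nra.
Qed.

Lemma Nrm_scale r K c P : Nrm r K (sscale c P) = Cmod c * Nrm r K P.
Proof.
  revert P; induction K; intros; simpl; unfold sscale at 1; rewrite Cmod_mul. auto.
  rewrite (sumR_ext _ _ (fun a => Cmod c * Nrm r K (shift a P))).
  rewrite sumR_scale. ring.
  intros. rewrite shift_sscale. auto.
Qed.

Lemma Nrm_sub r K P Q : 0 <= r -> Nrm r K (ssub P Q) <= Nrm r K P + Nrm r K Q.
Proof.
  intros. replace (ssub P Q) with (sadd P (sscale (Copp Defs.C1) Q)).
  rewrite <- (Rmult_1_l (Nrm r K Q)). rewrite <- Cmod_C1, <- (Cmod_opp Defs.C1), <- Nrm_scale.
  apply Nrm_add; auto.
  sext. unfold sadd, sscale, ssub. ring.
Qed.

Lemma Nrm_sub_sym r K P Q : Nrm r K (ssub P Q) = Nrm r K (ssub Q P).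
Proof.
  replace (ssub P Q) with (sscale (Copp Defs.C1) (ssub Q P)).
  rewrite Nrm_scale, Cmod_opp, Cmod_C1. ring.
  sext. unfold ssub, sscale. ring.
Qed.

Lemma Nrm_tri r K P Q S : 0 <= r ->
  Nrm r K (ssub P S) <= Nrm r K (ssub P Q) + Nrm r K (ssub Q S).
Proof.
  intros. replace (ssub P S) with (sadd (ssub P Q) (ssub Q S)). apply Nrm_add; auto.
  sext. unfold sadd, ssub. ring.
Qed.

Lemma Nrm_zero r K : Nrm r K szero = 0.
Proof.
  induction K; simpl; unfold szero at 1; rewrite Cmod_C0. auto.
  rewrite (sumR_ext _ _ (fun _ => 0)).
  assert (forall l, sumR l (fun _ => 0) = 0) by (induction l; simpl; lra).
  rewrite H. ring. intros. rewrite shift_szero. auto.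
Qed.

Lemma Nrm_sone r K : Nrm r K sone = 1.
Proof.
  destruct K; simpl; rewrite Cmod_C1. auto.
  rewrite (sumR_ext _ _ (fun _ => 0)).
  assert (forall l, sumR l (fun _ => 0) = 0) by (induction l; simpl; lra).
  rewrite H. ring. intros. rewrite shift_sone. apply Nrm_zero.
Qed.

Lemma Nrm_Xgen r K j : 0 <= r -> (j < n)%nat -> Nrm r K (Xgen j) <= r.
Proof.
  intros. destruct K; simpl.
  - unfold Xgen; simpl. rewrite Cmod_C0. auto.
  - unfold Xgen at 1; simpl. rewrite Cmod_C0.
    rewrite (sumR_ext _ _ (fun a => if Nat.eq_dec a j then 1 else 0)).
    rewrite (sumR_delta n j (fun _ => 1)); auto. lra.
    intros. rewrite shift_Xgen. destruct (Nat.eq_dec a j). apply Nrm_sone. apply Nrm_zero.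
Qed.

Lemma Nrm_sumS r K l F : 0 <= r -> Nrm r K (sumS l F) <= sumR l (fun a => Nrm r K (F a)).
Proof.
  intros; induction l; simpl. rewrite Nrm_zero; lra.
  pose proof (Nrm_add r K (F a) (sumS l F) H). lra.
Qed.

Lemma Nrm_mono_K r K P : 0 <= r -> Nrm r K P <= Nrm r (S K) P.
Proof.
  intro Hr. revert P; induction K; intros.
  - simpl. assert (0 <= sumR (seq 0 n) (fun a => Cmod (shift a P []))) by
      (apply sumR_nonneg; intros; apply Cmod_ge0). nra.
  - change (Nrm r (S K) P) with (Cmod (P []) + r * sumR (seq 0 n) (fun a => Nrm r K (shift a P))).
    change (Nrm r (S (S K)) P) with (Cmod (P []) + r * sumR (seq 0 n) (fun a => Nrm r (S K) (shift a P))).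
    assert (sumR (seq 0 n) (fun a => Nrm r K (shift a P)) <= sumR (seq 0 n) (fun a => Nrm r (S K) (shift a P)))
      by (apply sumR_le; auto). nra.
Qed.

Lemma Nrm_mono_K' r K K' P : 0 <= r -> (K <= K')%nat -> Nrm r K P <= Nrm r K' P.
Proof.
  intros Hr H; induction H. lra. pose proof (Nrm_mono_K r m P Hr). lra.
Qed.

Lemma Nrm_mono_r r r' K P : 0 <= r -> r <= r' -> Nrm r K P <= Nrm r' K P.
Proof.
  intros. revert P; induction K; intros; simpl. lra.
  assert (sumR (seq 0 n) (fun a => Nrm r K (shift a P)) <= sumR (seq 0 n) (fun a => Nrm r' K (shift a P)))
    by (apply sumR_le; auto).
  assert (0 <= sumR (seq 0 n) (fun a => Nrm r K (shift a P))) by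
    (apply sumR_nonneg; intros; apply Nrm_nonneg; auto).
  nra.
Qed.

Lemma Nrm_mul r K P Q : 0 <= r -> Nrm r K (smul P Q) <= Nrm r K P * Nrm r K Q.
Proof.
  intro Hr. revert P Q; induction K; intros; simpl.
  - rewrite smul_nil, Cmod_mul. lra.
  - rewrite smul_nil, Cmod_mul.
    set (SQ := sumR (seq 0 n) (fun a => Nrm r K (shift a Q))).
    set (SP := sumR (seq 0 n) (fun a => Nrm r K (shift a P))).
    assert (Hs : sumR (seq 0 n) (fun a => Nrm r K (shift a (smul P Q))) <=
      Cmod (P []) * SQ + SP * (Cmod (Q []) + r * SQ)).
    { unfold SQ, SP. rewrite <- sumR_scale.
      rewrite Rmult_comm, <- sumR_scale, <- sumR_add.
      apply sumR_le; intros. rewrite shift_smul.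
      eapply Rle_trans. apply Nrm_add; auto. rewrite Nrm_scale.
      pose proof (IHK (shift a P) Q).
      pose proof (Nrm_mono_K r K Q Hr). simpl in H1.
      pose proof (Nrm_nonneg r K (shift a P) Hr). nra. }
    pose proof (Cmod_ge0 (P [])). pose proof (Cmod_ge0 (Q [])).
    assert (0 <= SQ) by (apply sumR_nonneg; intros; apply Nrm_nonneg; auto).
    assert (0 <= SP) by (apply sumR_nonneg; intros; apply Nrm_nonneg; auto).
    nra.
Qed.

Definition good (w : list nat) : bool := forallb (fun i => Nat.ltb i n) w.

Lemma Nrm_coef r K P w : 1 <= r -> good w = true -> (length w <= K)%nat ->
  Cmod (P w) <= Nrm r K P.
Proof.
  intros Hr. revert K P; induction w; intros K P Hg Hl.
  - apply Nrm_head; lra.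
  - destruct K. simpl in Hl; lia.
    simpl in Hg. apply andb_prop in Hg as [Ha Hg]. apply Nat.ltb_lt in Ha.
    simpl. change (P (a :: w)) with (shift a P w).
    assert (Cmod (shift a P w) <= Nrm r K (shift a P)) by (apply IHw; auto; simpl in Hl; lia).
    assert (Nrm r K (shift a P) <= sumR (seq 0 n) (fun b => Nrm r K (shift b P))).
    { apply (sumR_single _ (fun b => Nrm r K (shift b P))). apply in_seq; lia.
      intros; apply Nrm_nonneg; lra. }
    pose proof (Cmod_ge0 (P [])). pose proof (Cmod_ge0 (shift a P w)). nra.
Qed.

Lemma sum_map_app {A} (g : A -> R) l1 l2 :
  fold_right Rplus 0 (map g (l1 ++ l2)) = fold_right Rplus 0 (map g l1) + fold_right Rplus 0 (map g l2).
Proof. induction l1; simpl; [lra|]. rewrite IHl1. lra. Qed.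

Lemma deg_mass_S P k :
  deg_mass n P (S k) = sumR (seq 0 n) (fun a => deg_mass n (shift a P) k).
Proof.
  unfold deg_mass. simpl. generalize (seq 0 n). induction l; simpl; auto.
  rewrite sum_map_app, IHl, map_map. reflexivity.
Qed.

Lemma sum_f_sumR l F K :
  sum_f_R0 (fun k => sumR l (fun a => F k a)) K = sumR l (fun a => sum_f_R0 (fun k => F k a) K).
Proof.
  induction K; simpl; auto. rewrite IHK, <- sumR_add. reflexivity.
Qed.

Lemma norm_partial_Nrm r P K : norm_partial n r P K = Nrm r K P.
Proof.
  unfold norm_partial. revert P; induction K; intros.
  - simpl. unfold deg_mass; simpl. ring.
  - rewrite decomp_sum by lia. simpl pred.
    transitivity (Cmod (P []) + r * sumR (seq 0 n) (fun a => sum_f_R0 (fun k => deg_mass n (shift a P) k * r ^ k) K)).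
    + f_equal. unfold deg_mass; simpl; ring.
      rewrite <- sum_f_sumR. rewrite (scal_sum _ K r).
      apply sum_eq. intros. rewrite deg_mass_S.
      rewrite (Rmult_comm _ r), (Rmult_comm _ (r ^ S i)), <- !sumR_scale.
      apply sumR_ext. intros. simpl. ring.
    + simpl. f_equal. f_equal. apply sumR_ext. intros. apply IHK.
Qed.

End N.


Section C.
Variable n : nat.

Fixpoint scomp (N : nat) (P : ncseries) (Z : nat -> ncseries) : ncseries :=
  match N with
  | O => sscale (P []) sone
  | S N' => sadd (sscale (P []) sone)
             (sumS (seq 0 n) (fun a => smul (Z a) (scomp N' (shift a P) Z)))
  end.

Lemma comp_ext_Z N P Z Z' : (forall a, (a < n)%nat -> Z a = Z' a) ->
  scomp N P Z = scomp N P Z'.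
Proof.
  intros H; revert P; induction N; intros; simpl; auto.
  f_equal. apply sumS_ext. intros a Ha. apply in_seq in Ha. rewrite H by lia.
  rewrite IHN. reflexivity.
Qed.

Lemma comp_add N P Q Z : scomp N (sadd P Q) Z = sadd (scomp N P Z) (scomp N Q Z).
Proof.
  revert P Q; induction N; intros; simpl.
  - sext. unfold sadd, sscale. ring.
  - rewrite (sumS_ext _ _ (fun a => sadd (smul (Z a) (scomp N (shift a P) Z))
                                         (smul (Z a) (scomp N (shift a Q) Z)))).
    rewrite sumS_add. sext. unfold sadd, sscale. ring.
    intros. rewrite shift_sadd, IHN, smul_addr. reflexivity.
Qed.

Lemma comp_scale N c P Z : scomp N (sscale c P) Z = sscale c (scomp N P Z).
Proof.
  revert P; induction N; intros; simpl.
  - sext. unfold sscale. ring.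
  - rewrite (sumS_ext _ _ (fun a => sscale c (smul (Z a) (scomp N (shift a P) Z)))).
    rewrite sumS_scale. sext. unfold sadd, sscale. ring.
    intros. rewrite shift_sscale, IHN, smul_scaler. reflexivity.
Qed.

Lemma comp_zero N Z : scomp N szero Z = szero.
Proof.
  replace szero with (sscale Defs.C0 szero) at 1 by (sext; unfold sscale, szero; ring).
  rewrite comp_scale. sext. unfold sscale, szero. ring.
Qed.

Lemma comp_sub N P Q Z : scomp N (ssub P Q) Z = ssub (scomp N P Z) (scomp N Q Z).
Proof.
  replace (ssub P Q) with (sadd P (sscale (Copp Defs.C1) Q)) by (sext; unfold sadd, sscale, ssub; ring).
  rewrite comp_add, comp_scale. sext. unfold sadd, sscale, ssub. ring.
Qed.

Lemma comp_sumS N l F Z : scomp N (sumS l F) Z = sumS l (fun a => scomp N (F a) Z).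
Proof. induction l; simpl. apply comp_zero. rewrite comp_add, IHl. reflexivity. Qed.

Lemma comp_sone N Z : scomp N sone Z = sone.
Proof.
  destruct N; simpl.
  - sext. unfold sscale. simpl. ring.
  - rewrite (sumS_ext _ _ (fun _ => szero)). rewrite sumS_zero.
    sext. unfold sadd, sscale, szero. simpl. ring.
    intros. rewrite shift_sone, comp_zero, smul_zeror. reflexivity.
Qed.

Lemma comp_Xgen N j Z : (j < n)%nat -> scomp (S N) (Xgen j) Z = Z j.
Proof.
  intros Hj. simpl.
  rewrite (sumS_ext _ _ (fun a => if Nat.eq_dec a j then Z a else szero)).
  rewrite sumS_delta by auto. sext. unfold sadd, sscale, Xgen. simpl. ring.
  intros. rewrite shift_Xgen. destruct (Nat.eq_dec a j).
  rewrite comp_sone, smul_oner. auto. rewrite comp_zero, smul_zeror. auto.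
Qed.

Definition degle (d : nat) (P : ncseries) : Prop :=
  forall w, (d < length w)%nat -> P w = Defs.C0.

Lemma degle_mono d d' P : (d <= d')%nat -> degle d P -> degle d' P.
Proof. unfold degle; intros; apply H0; lia. Qed.
Lemma degle_shift d a P : degle (S d) P -> degle d (shift a P).
Proof. unfold degle, shift; intros; apply H; simpl; lia. Qed.
Lemma degle0_shift a P : degle 0 P -> shift a P = szero.
Proof. unfold degle, shift; intros; sext; apply H; simpl; lia. Qed.
Lemma degle_add d P Q : degle d P -> degle d Q -> degle d (sadd P Q).
Proof. unfold degle, sadd; intros. rewrite H, H0 by auto. ring. Qed.
Lemma degle_sub d P Q : degle d P -> degle d Q -> degle d (ssub P Q).
Proof. unfold degle, ssub; intros. rewrite H, H0 by auto. ring. Qed.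
Lemma degle_scale d c P : degle d P -> degle d (sscale c P).
Proof. unfold degle, sscale; intros. rewrite H by auto. ring. Qed.
Lemma degle_szero d : degle d szero.
Proof. unfold degle; auto. Qed.
Lemma degle_sone d : degle d sone.
Proof. unfold degle, sone; intros. destruct w; simpl in *; auto. lia. Qed.
Lemma degle_Xgen j : degle 1 (Xgen j).
Proof. unfold degle, Xgen; intros.
  destruct (list_eq_dec Nat.eq_dec w [j]); auto. subst; simpl in H; lia. Qed.
Lemma degle_sumS d l F : (forall a, In a l -> degle d (F a)) -> degle d (sumS l F).
Proof. induction l; simpl; intros. apply degle_szero. apply degle_add; auto. Qed.
Lemma degle_smul p q P Q : degle p P -> degle q Q -> degle (p + q) (smul P Q).
Proof.
  intros HP HQ w. revert p P HP. induction w; intros p P HP Hl.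
  - simpl in Hl; lia.
  - rewrite smul_cons. destruct p.
    + rewrite degle0_shift by auto. rewrite smul_zerol.
      rewrite HQ by (simpl in *; lia). unfold szero. ring.
    + rewrite (IHw p (shift a P)). 2: apply degle_shift; auto. 2: simpl in Hl; lia.
      destruct (Nat.lt_ge_cases q (length (a :: w))).
      * rewrite HQ by auto. ring.
      * simpl in *. lia.
Qed.

Lemma degle_comp N P Z d : (forall a, (a < n)%nat -> degle d (Z a)) ->
  degle (N * d) (scomp N P Z).
Proof.
  intros HZ; revert P; induction N; intros; simpl.
  - apply degle_scale, degle_sone.
  - apply degle_add. apply degle_scale, degle_sone.
    apply degle_sumS; intros. apply in_seq in H. apply degle_smul; auto. apply HZ; lia.
Qed.

Section Y.
Variable Y : nat -> ncseries.

Lemma comp_stab1 D P : degle D P -> scomp (S D) P Y = scomp D P Y.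
Proof.
  revert P; induction D; intros.
  - change (scomp 1 P Y) with
      (sadd (sscale (P []) sone) (sumS (seq 0 n) (fun a => smul (Y a) (scomp 0 (shift a P) Y)))).
    rewrite (sumS_ext _ _ (fun _ => szero)). rewrite sumS_zero.
    sext; unfold sadd, szero; simpl; ring.
    intros. rewrite degle0_shift, comp_zero, smul_zeror by auto. auto.
  - change (scomp (S (S D)) P Y) with
      (sadd (sscale (P []) sone) (sumS (seq 0 n) (fun a => smul (Y a) (scomp (S D) (shift a P) Y)))).
    change (scomp (S D) P Y) with
      (sadd (sscale (P []) sone) (sumS (seq 0 n) (fun a => smul (Y a) (scomp D (shift a P) Y)))).
    f_equal. apply sumS_ext; intros. rewrite IHD; auto. apply degle_shift; auto.
Qed.

Lemma comp_stab d D P : degle d P -> (d <= D)%nat -> scomp D P Y = scomp d P Y.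
Proof.
  intros Hd HD. induction HD; auto. rewrite comp_stab1; auto.
  eapply degle_mono; eauto.
Qed.

Lemma comp_mul D p q P Q : degle p P -> degle q Q -> (p + q <= D)%nat ->
  scomp D (smul P Q) Y = smul (scomp D P Y) (scomp D Q Y).
Proof.
  revert p q P Q; induction D; intros p q P Q HP HQ HD.
  - simpl. rewrite smul_scalel, smul_scaler, smul_onel, smul_nil.
    sext. unfold sscale. ring.
  - assert (Hclaim : forall a, scomp D (smul (shift a P) Q) Y =
             smul (scomp D (shift a P) Y) (scomp (S D) Q Y)).
    { intros a. destruct p.
      - rewrite degle0_shift by auto. rewrite smul_zerol, comp_zero, smul_zerol. auto.
      - rewrite (IHD p q); auto. 2: apply degle_shift; auto. 2: lia.
        rewrite (comp_stab1 D Q). auto. apply (degle_mono q); [lia|auto]. }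
    set (CQ := scomp (S D) Q Y).
    change (scomp (S D) (smul P Q) Y) with
      (sadd (sscale (smul P Q []) sone) (sumS (seq 0 n) (fun a => smul (Y a) (scomp D (shift a (smul P Q)) Y)))).
    change (scomp (S D) P Y) with
      (sadd (sscale (P []) sone) (sumS (seq 0 n) (fun a => smul (Y a) (scomp D (shift a P) Y)))).
    rewrite (sumS_ext _ _ (fun a => sadd (sscale (P []) (smul (Y a) (scomp D (shift a Q) Y)))
                                        (smul (Y a) (smul (scomp D (shift a P) Y) CQ)))).
    2:{ intros. rewrite shift_smul, comp_add, comp_scale, Hclaim, smul_addr, smul_scaler. reflexivity. }
    rewrite sumS_add, sumS_scale.
    rewrite smul_addl, smul_scalel, smul_onel, smul_sumSl.
    rewrite (sumS_ext _ (fun a => smul (smul (Y a) (scomp D (shift a P) Y)) CQ)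
                        (fun a => smul (Y a) (smul (scomp D (shift a P) Y) CQ))).
    2:{ intros; apply smul_assoc. }
    rewrite smul_nil.
    unfold CQ at 2. change (scomp (S D) Q Y) with
      (sadd (sscale (Q []) sone) (sumS (seq 0 n) (fun a => smul (Y a) (scomp D (shift a Q) Y)))).
    sext. unfold sadd, sscale. ring.
Qed.

Lemma comp_assoc N P Z d D : (forall a, (a < n)%nat -> degle d (Z a)) -> (N * d <= D)%nat ->
  scomp D (scomp N P Z) Y = scomp N P (fun a => scomp D (Z a) Y).
Proof.
  intros HZ. revert P; induction N; intros P HD; simpl.
  - rewrite comp_scale, comp_sone. auto.
  - rewrite comp_add, comp_scale, comp_sone, comp_sumS. f_equal.
    apply sumS_ext; intros a Ha. apply in_seq in Ha.
    rewrite (comp_mul D d (N * d)).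
    + rewrite IHN; auto. simpl in HD; lia.
    + apply HZ; lia.
    + apply degle_comp; auto.
    + simpl in HD; lia.
Qed.

End Y.
End C.


Section E.
Variable n : nat.

Lemma Nrm_sscale_sone r K c : Nrm n r K (sscale c sone) = Cmod c.
Proof. rewrite Nrm_scale, Nrm_sone. ring. Qed.

Lemma comp_norm r rho K N P Z : 0 <= r -> 0 <= rho ->
  (forall a, (a < n)%nat -> Nrm n r K (Z a) <= rho) ->
  Nrm n r K (scomp n N P Z) <= Nrm n rho N P.
Proof.
  intros Hr Hrho HZ. revert P; induction N; intros; simpl scomp.
  - rewrite Nrm_sscale_sone. simpl. lra.
  - eapply Rle_trans. apply Nrm_add; auto. rewrite Nrm_sscale_sone.
    simpl Nrm at 2. apply Rplus_le_compat_l.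
    eapply Rle_trans. apply Nrm_sumS; auto.
    rewrite <- sumR_scale. apply sumR_le; intros a Ha. apply in_seq in Ha.
    eapply Rle_trans. apply Nrm_mul; auto.
    apply Rmult_le_compat; auto using Nrm_nonneg. apply HZ; lia.
Qed.

Lemma comp_S_sub N P Z :
  ssub (scomp n (S N) P Z) (scomp n N P Z) =
  match N with
  | O => sumS (seq 0 n) (fun a => smul (Z a) (scomp n 0 (shift a P) Z))
  | S N' => sumS (seq 0 n) (fun a => smul (Z a) (ssub (scomp n (S N') (shift a P) Z) (scomp n N' (shift a P) Z)))
  end.
Proof.
  destruct N.
  - change (scomp n 1 P Z) with (sadd (sscale (P []) sone)
      (sumS (seq 0 n) (fun a => smul (Z a) (scomp n 0 (shift a P) Z)))).
    change (scomp n 0 P Z) with (sscale (P []) sone).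
    sext. unfold ssub, sadd. ring.
  - change (scomp n (S (S N)) P Z) with (sadd (sscale (P []) sone)
      (sumS (seq 0 n) (fun a => smul (Z a) (scomp n (S N) (shift a P) Z)))).
    change (scomp n (S N) P Z) with (sadd (sscale (P []) sone)
      (sumS (seq 0 n) (fun a => smul (Z a) (scomp n N (shift a P) Z)))).
    rewrite (sumS_ext _ (fun a => smul (Z a) (ssub _ _))
      (fun a => ssub (smul (Z a) (scomp n (S N) (shift a P) Z)) (smul (Z a) (scomp n N (shift a P) Z)))).
    rewrite sumS_sub. sext. unfold ssub, sadd. ring.
    intros; apply smul_subr.
Qed.

Lemma comp_tail r rho Bb K N P Z : 0 <= r -> 0 <= rho -> rho <= Bb ->
  (forall a, (a < n)%nat -> Nrm n r K (Z a) <= rho) ->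
  Bb ^ (S N) * Nrm n r K (ssub (scomp n (S N) P Z) (scomp n N P Z)) <= rho ^ (S N) * Nrm n Bb (S N) P.
Proof.
  intros Hr Hrho HB HZ. revert P; induction N; intros; rewrite comp_S_sub.
  - eapply Rle_trans. apply Rmult_le_compat_l. apply pow_le; lra.
    eapply Rle_trans. apply Nrm_sumS; auto.
    apply (sumR_le _ _ (fun a => rho * Cmod (P [a]))).
    intros a Ha. apply in_seq in Ha. eapply Rle_trans. apply Nrm_mul; auto.
    simpl scomp. rewrite Nrm_sscale_sone. unfold shift.
    apply Rmult_le_compat_r. apply Cmod_ge0. apply HZ; lia.
    rewrite sumR_scale. simpl. rewrite !Rmult_1_r.
    pose proof (Cmod_ge0 (P [])).
    assert (0 <= sumR (seq 0 n) (fun a => Cmod (P [a]))) by (apply sumR_nonneg; intros; apply Cmod_ge0).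
    assert (sumR (seq 0 n) (fun a => Cmod (P [a])) = sumR (seq 0 n) (fun a => Cmod (shift a P []))) by reflexivity.
    rewrite <- H1. nra.
  - set (NN := S N) in *.
    assert (Hs : Nrm n r K (sumS (seq 0 n) (fun a => smul (Z a)
               (ssub (scomp n NN (shift a P) Z) (scomp n N (shift a P) Z))))
           <= sumR (seq 0 n) (fun a => rho * Nrm n r K (ssub (scomp n NN (shift a P) Z) (scomp n N (shift a P) Z)))).
    { eapply Rle_trans. apply Nrm_sumS; auto. apply sumR_le; intros a Ha. apply in_seq in Ha.
      eapply Rle_trans. apply Nrm_mul; auto. apply Rmult_le_compat_r. apply Nrm_nonneg; auto. apply HZ; lia. }
    assert (Hs2 : Bb ^ NN * sumR (seq 0 n) (fun a => rho * Nrm n r K (ssub (scomp n NN (shift a P) Z) (scomp n N (shift a P) Z)))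
            <= rho * (rho ^ NN * sumR (seq 0 n) (fun a => Nrm n Bb NN (shift a P)))).
    { rewrite <- !sumR_scale. apply sumR_le; intros. specialize (IHN (shift a P)). fold NN in IHN. nra. }
    change (rho ^ S NN) with (rho * rho ^ NN). change (Bb ^ S NN) with (Bb * Bb ^ NN).
    change (Nrm n Bb (S NN) P) with (Cmod (P []) + Bb * sumR (seq 0 n) (fun a => Nrm n Bb NN (shift a P))).
    assert (0 <= Bb ^ NN) by (apply pow_le; lra).
    assert (0 <= rho ^ NN) by (apply pow_le; lra).
    assert (0 <= sumR (seq 0 n) (fun a => Nrm n Bb NN (shift a P))) by (apply sumR_nonneg; intros; apply Nrm_nonneg; lra).
    pose proof (Cmod_ge0 (P [])).
    assert (Bb * Bb ^ NN * Nrm n r K (sumS (seq 0 n) (fun a => smul (Z a) (ssub (scomp n NN (shift a P) Z) (scomp n N (shift a P) Z))))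
       <= Bb * (rho * (rho ^ NN * sumR (seq 0 n) (fun a => Nrm n Bb NN (shift a P))))).
    { rewrite Rmult_assoc. apply Rmult_le_compat_l. lra. nra. }
    assert (0 <= rho * rho ^ NN * Cmod (P [])) by (apply Rmult_le_pos; [apply Rmult_le_pos|]; lra). nra.
Qed.

Lemma comp_lip r rho Bb K N P Z Z' delta : 0 <= r -> 0 <= rho -> rho <= Bb -> 0 <= delta ->
  (forall a, (a < n)%nat -> Nrm n r K (Z a) <= rho /\ Nrm n r K (Z' a) <= rho /\
                           Nrm n r K (ssub (Z a) (Z' a)) <= delta) ->
  (Bb - rho) * Nrm n r K (ssub (scomp n N P Z) (scomp n N P Z')) <= delta * (Nrm n Bb N P - Nrm n rho N P).
Proof.
  intros Hr Hrho HB Hd HZ. revert P; induction N; intros.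
  - simpl scomp. replace (ssub (sscale (P []) sone) (sscale (P []) sone)) with szero
      by (sext; unfold ssub, sscale, szero; ring).
    rewrite Nrm_zero. simpl. lra.
  - set (F := fun t a => Nrm n t N (shift a P)).
    replace (ssub (scomp n (S N) P Z) (scomp n (S N) P Z')) with
      (sumS (seq 0 n) (fun a => sadd (smul (ssub (Z a) (Z' a)) (scomp n N (shift a P) Z))
                                     (smul (Z' a) (ssub (scomp n N (shift a P) Z) (scomp n N (shift a P) Z'))))).
    2:{ simpl scomp.
        transitivity (ssub (sumS (seq 0 n) (fun a => smul (Z a) (scomp n N (shift a P) Z)))
                           (sumS (seq 0 n) (fun a => smul (Z' a) (scomp n N (shift a P) Z')))).
        - rewrite <- sumS_sub. apply sumS_ext; intros.
          rewrite smul_subl, smul_subr. sext. unfold sadd, ssub. ring.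
        - sext. unfold sadd, ssub. ring. }
    assert (Hs : Nrm n r K (sumS (seq 0 n) (fun a => sadd (smul (ssub (Z a) (Z' a)) (scomp n N (shift a P) Z))
                                     (smul (Z' a) (ssub (scomp n N (shift a P) Z) (scomp n N (shift a P) Z')))))
       <= sumR (seq 0 n) (fun a => delta * F rho a + rho * Nrm n r K (ssub (scomp n N (shift a P) Z) (scomp n N (shift a P) Z')))).
    { eapply Rle_trans. apply Nrm_sumS; auto. apply sumR_le; intros a Ha. apply in_seq in Ha.
      destruct (HZ a) as [H1 [H2 H3]]. lia.
      eapply Rle_trans. apply Nrm_add; auto. apply Rplus_le_compat.
      - eapply Rle_trans. apply Nrm_mul; auto. apply Rmult_le_compat; auto using Nrm_nonneg.
        apply comp_norm; auto. intros b Hb. apply HZ; auto.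
      - eapply Rle_trans. apply Nrm_mul; auto. apply Rmult_le_compat_r; auto using Nrm_nonneg. }
    eapply Rle_trans. apply Rmult_le_compat_l. lra. apply Hs.
    change (Nrm n Bb (S N) P - Nrm n rho (S N) P) with
      ((Cmod (P []) + Bb * sumR (seq 0 n) (F Bb)) - (Cmod (P []) + rho * sumR (seq 0 n) (F rho))).
    replace ((Cmod (P []) + Bb * sumR (seq 0 n) (F Bb)) - (Cmod (P []) + rho * sumR (seq 0 n) (F rho)))
      with (sumR (seq 0 n) (fun a => Bb * F Bb a - rho * F rho a)).
    2:{ rewrite sumR_sub, !sumR_scale. ring. }
    rewrite <- !sumR_scale. apply sumR_le; intros a Ha.
    specialize (IHN (shift a P)).
    assert (F rho a <= F Bb a) by (unfold F; apply Nrm_mono_r; auto).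
    assert (0 <= F rho a) by (unfold F; apply Nrm_nonneg; auto).
    unfold F in *.
    set (Nd := Nrm n r K (ssub (scomp n N (shift a P) Z) (scomp n N (shift a P) Z'))) in *.
    set (FB := Nrm n Bb N (shift a P)) in *. set (Fr := Nrm n rho N (shift a P)) in *.
    assert (rho * ((Bb - rho) * Nd) <= rho * (delta * (FB - Fr))) by (apply Rmult_le_compat_l; lra).
    assert (0 <= delta * ((Bb - rho) * (FB - Fr))) by (apply Rmult_le_pos; [lra| apply Rmult_le_pos; lra]).
    nra.
Qed.

Lemma comp_X_nil N P : scomp n N P Xgen [] = P [].
Proof.
  destruct N; simpl; unfold sscale, sadd; simpl.
  - ring.
  - assert (forall l, sumS l (fun a => smul (Xgen a) (scomp n N (shift a P) Xgen)) [] = Defs.C0).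
    { induction l; simpl; auto. unfold sadd. rewrite IHl, smul_nil. unfold Xgen; simpl. ring. }
    rewrite H. ring.
Qed.

Lemma shift_comp_X a N P : (a < n)%nat ->
  shift a (scomp n (S N) P Xgen) = scomp n N (shift a P) Xgen.
Proof.
  intros Ha. simpl scomp. rewrite shift_sadd, shift_sscale, shift_sone, shift_sumS.
  rewrite (sumS_ext _ _ (fun b => if Nat.eq_dec b a then scomp n N (shift b P) Xgen else szero)).
  rewrite sumS_delta by auto. sext. unfold sadd, sscale, szero. ring.
  intros b Hb. rewrite shift_smul, shift_Xgen. unfold Xgen at 1. simpl.
  destruct (Nat.eq_dec a b); destruct (Nat.eq_dec b a); try lia; subst.
  - rewrite smul_onel. sext. unfold sadd, sscale. ring.
  - rewrite smul_zerol. sext. unfold sadd, sscale, szero. ring.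
Qed.

Lemma trunc_bound r Bb K N P : 0 <= r -> r <= Bb ->
  Bb ^ (S N) * Nrm n r K (ssub P (scomp n N P Xgen)) <= r ^ (S N) * Nrm n Bb K P.
Proof.
  intros Hr HB. revert K P; induction N; intros K P; destruct K.
  - change (Nrm n r 0 (ssub P ?c)) with (Cmod (ssub P c [])). unfold ssub. rewrite comp_X_nil.
    replace (Csub (P []) (P [])) with Defs.C0 by ring. rewrite Cmod_C0.
    rewrite Rmult_0_r. apply Rmult_le_pos. apply pow_le; lra. apply Nrm_nonneg; lra.
  - change (Nrm n r (S K) (ssub P (scomp n 0 P Xgen))) with
      (Cmod (ssub P (scomp n 0 P Xgen) []) + r * sumR (seq 0 n) (fun a => Nrm n r K (shift a (ssub P (scomp n 0 P Xgen))))).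
    unfold ssub at 1. rewrite comp_X_nil. replace (Csub (P []) (P [])) with Defs.C0 by ring. rewrite Cmod_C0.
    rewrite (sumR_ext _ _ (fun a => Nrm n r K (shift a P))).
    2:{ intros. f_equal. simpl. sext. unfold shift, ssub, sscale. simpl. ring. }
    simpl Nrm at 2.
    assert (sumR (seq 0 n) (fun a => Nrm n r K (shift a P)) <= sumR (seq 0 n) (fun a => Nrm n Bb K (shift a P)))
      by (apply sumR_le; intros; apply Nrm_mono_r; auto).
    assert (0 <= sumR (seq 0 n) (fun a => Nrm n r K (shift a P))) by (apply sumR_nonneg; intros; apply Nrm_nonneg; auto).
    pose proof (Cmod_ge0 (P [])). simpl.
    assert (Bb * r * sumR (seq 0 n) (fun a => Nrm n r K (shift a P)) <= Bb * r * sumR (seq 0 n) (fun a => Nrm n Bb K (shift a P)))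
      by (apply Rmult_le_compat_l; nra).
    assert (0 <= r * Cmod (P [])) by nra. nra.
  - change (Nrm n r 0 (ssub P ?c)) with (Cmod (ssub P c [])). unfold ssub. rewrite comp_X_nil.
    replace (Csub (P []) (P [])) with Defs.C0 by ring. rewrite Cmod_C0.
    rewrite Rmult_0_r. apply Rmult_le_pos. apply pow_le; lra. apply Nrm_nonneg; lra.
  - change (Nrm n r (S K) (ssub P (scomp n (S N) P Xgen))) with
      (Cmod (ssub P (scomp n (S N) P Xgen) []) + r * sumR (seq 0 n) (fun a => Nrm n r K (shift a (ssub P (scomp n (S N) P Xgen))))).
    unfold ssub at 1. rewrite comp_X_nil. replace (Csub (P []) (P [])) with Defs.C0 by ring. rewrite Cmod_C0.
    rewrite (sumR_ext _ _ (fun a => Nrm n r K (ssub (shift a P) (scomp n N (shift a P) Xgen)))).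
    2:{ intros a Ha. apply in_seq in Ha. rewrite shift_ssub, shift_comp_X by lia. reflexivity. }
    change (Nrm n Bb (S K) P) with (Cmod (P []) + Bb * sumR (seq 0 n) (fun a => Nrm n Bb K (shift a P))).
    assert (H1 : Bb ^ S N * sumR (seq 0 n) (fun a => Nrm n r K (ssub (shift a P) (scomp n N (shift a P) Xgen)))
      <= r ^ S N * sumR (seq 0 n) (fun a => Nrm n Bb K (shift a P))).
    { rewrite <- !sumR_scale. apply sumR_le; intros. apply IHN. }
    assert (0 <= sumR (seq 0 n) (fun a => Nrm n Bb K (shift a P))) by (apply sumR_nonneg; intros; apply Nrm_nonneg; lra).
    pose proof (Cmod_ge0 (P [])).
    assert (0 <= r ^ S N) by (apply pow_le; lra).
    change (Bb ^ S (S N)) with (Bb * Bb ^ S N). change (r ^ S (S N)) with (r * r ^ S N).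
    assert (Bb * (Bb ^ S N * (r * sumR (seq 0 n) (fun a => Nrm n r K (ssub (shift a P) (scomp n N (shift a P) Xgen)))))
            <= Bb * (r * (r ^ S N * sumR (seq 0 n) (fun a => Nrm n Bb K (shift a P))))).
    { apply Rmult_le_compat_l. lra. nra. }
    assert (0 <= r * r ^ S N * Cmod (P [])) by (apply Rmult_le_pos; [apply Rmult_le_pos|]; lra). nra.
Qed.

End E.


Section S.
Variable n : nat.

Definition supp (P : ncseries) : Prop := forall w, good n w = false -> P w = Defs.C0.

Lemma supp_shift a P : supp P -> supp (shift a P).
Proof.
  unfold supp, shift; intros H v Hv. apply H. simpl. rewrite Hv. destruct (Nat.ltb a n); auto.
Qed.

Lemma supp_smul P Q : supp P -> supp Q -> supp (smul P Q).
Proof.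
  intros HP HQ w. revert P HP. induction w; intros P HP Hg.
  - simpl in Hg. discriminate.
  - rewrite smul_cons. rewrite HQ by auto. simpl in Hg.
    destruct (Nat.ltb a n) eqn:E.
    + simpl in Hg. rewrite IHw; auto. ring. apply supp_shift; auto.
    + replace (shift a P) with szero. rewrite smul_zerol. unfold szero. ring.
      sext. unfold szero, shift. symmetry. apply HP. simpl. rewrite E. auto.
Qed.

Lemma supp_sadd P Q : supp P -> supp Q -> supp (sadd P Q).
Proof. unfold supp, sadd; intros. rewrite H, H0 by auto. ring. Qed.
Lemma supp_ssub P Q : supp P -> supp Q -> supp (ssub P Q).
Proof. unfold supp, ssub; intros. rewrite H, H0 by auto. ring. Qed.
Lemma supp_sscale_sone c : supp (sscale c sone).
Proof. unfold supp, sscale, sone; intros. destruct w. discriminate. ring. Qed.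
Lemma supp_sumS l F : (forall a, In a l -> supp (F a)) -> supp (sumS l F).
Proof. induction l; simpl; intros. unfold supp, szero; auto. apply supp_sadd; auto. Qed.

Lemma supp_scomp N P Z : (forall a, (a < n)%nat -> supp (Z a)) -> supp (scomp n N P Z).
Proof.
  intros HZ; revert P; induction N; intros; simpl.
  apply supp_sscale_sone.
  apply supp_sadd. apply supp_sscale_sone. apply supp_sumS; intros.
  apply in_seq in H. apply supp_smul; auto. apply HZ; lia.
Qed.

Lemma supp_Xgen j : (j < n)%nat -> supp (Xgen j).
Proof.
  unfold supp, Xgen; intros. destruct (list_eq_dec Nat.eq_dec w [j]); auto.
  subst. simpl in H0. apply Nat.ltb_lt in H. rewrite H in H0. discriminate.
Qed.

Lemma good_Forall w : good n w = true <-> Forall (fun i => (i < n)%nat) w.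
Proof.
  unfold good. rewrite forallb_forall, Forall_forall.
  split; intros H x Hx; specialize (H x Hx); apply Nat.ltb_lt; auto.
Qed.

Lemma Csum_app l1 l2 : Csum (l1 ++ l2) = Cadd (Csum l1) (Csum l2).
Proof. induction l1; simpl. ring. rewrite IHl1. ring. Qed.

Lemma Csum_map_add {A} (f g : A -> Cplx) l :
  Csum (map (fun x => Cadd (f x) (g x)) l) = Cadd (Csum (map f l)) (Csum (map g l)).
Proof. induction l; simpl. ring. rewrite IHl. ring. Qed.

Lemma Csum_map_zero {A} (l : list A) : Csum (map (fun _ => Defs.C0) l) = Defs.C0.
Proof. induction l; simpl. ring. rewrite IHl. ring. Qed.

Lemma Csum_swap {A B} (F : A -> B -> Cplx) l1 l2 :
  Csum (map (fun a => Csum (map (fun k => F a k) l2)) l1) =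
  Csum (map (fun k => Csum (map (fun a => F a k) l1)) l2).
Proof.
  induction l1; simpl. symmetry. apply Csum_map_zero.
  rewrite IHl1. rewrite <- Csum_map_add. reflexivity.
Qed.

Lemma smul_Csum {A} (P : ncseries) (F : A -> ncseries) l :
  smul P (fun w => Csum (map (fun x => F x w) l)) = fun w => Csum (map (fun x => smul P (F x) w) l).
Proof.
  induction l; simpl.
  - change (fun _ : list nat => Defs.C0) with szero. rewrite smul_zeror. reflexivity.
  - change (fun w => Cadd (F a w) (Csum (map (fun x => F x w) l))) with
      (sadd (F a) (fun w => Csum (map (fun x => F x w) l))).
    rewrite smul_addr, IHl. reflexivity.
Qed.

Lemma sumS_Csum l F w : sumS l F w = Csum (map (fun a => F a w) l).
Proof. induction l; simpl; auto. unfold sadd. rewrite IHl. reflexivity. Qed.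

Section Y.
Variable Y : nat -> ncseries.

Definition Tk (k : nat) (G : ncseries) : ncseries :=
  fun w => Csum (map (fun q => Cmul (G q) (mono_eval Y q w)) (words n k)).

Lemma Tk_S k G : Tk (S k) G = sumS (seq 0 n) (fun a => smul (Y a) (Tk k (shift a G))).
Proof.
  sext. rewrite sumS_Csum. unfold Tk at 1. simpl words.
  transitivity (Csum (map (fun a => Csum (map (fun q => Cmul (G q) (mono_eval Y q w))
                  (map (cons a) (words n k)))) (seq 0 n))).
  { generalize (seq 0 n). induction l; simpl; auto. rewrite map_app, Csum_app, IHl. reflexivity. }
  f_equal. apply map_ext; intro a. unfold Tk.
  rewrite (smul_Csum (Y a) (fun q => sscale (shift a G q) (mono_eval Y q))).
  rewrite map_map. f_equal. apply map_ext; intro q. simpl. rewrite smul_scaler. reflexivity.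
Qed.

Lemma scomp_eval K G w : scomp n K G Y w = eval_partial n G Y w K.
Proof.
  unfold eval_partial. revert G w; induction K; intros.
  - simpl. unfold Tk, sscale. simpl. ring.
  - change (seq 0 (S (S K))) with (0%nat :: seq 1 (S K)). rewrite <- seq_shift, map_cons, map_map.
    simpl scomp. unfold sadd at 1.
    rewrite Csum_cons. f_equal. simpl. unfold sscale. ring.
    assert (H : forall k G w, Csum (map (fun q => Cmul (G q) (mono_eval Y q w)) (words n k)) = Tk k G w) by reflexivity.
    rewrite (map_ext _ (fun k => Tk (S k) G w)) by (intros; apply H).
    rewrite sumS_Csum.
    rewrite (map_ext _ (fun a => Csum (map (fun k => smul (Y a) (Tk k (shift a G)) w) (seq 0 (S K))))).
    2:{ intros a.
        assert (scomp n K (shift a G) Y = fun w => Csum (map (fun k => Tk k (shift a G) w) (seq 0 (S K)))).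
        { sext. rewrite IHK. apply f_equal. apply map_ext; intros; apply H. }
        rewrite H0. rewrite smul_Csum. reflexivity. }
    rewrite Csum_swap. f_equal. apply map_ext; intro k. rewrite Tk_S, sumS_Csum. reflexivity.
Qed.
End Y.

Lemma Un_cv_const c : Un_cv (fun _ => c) c.
Proof. intros e He. exists 0%nat. intros. unfold R_dist. rewrite Rminus_diag, Rabs_R0. auto. Qed.

Lemma Un_cv_le u l m c : Un_cv u l -> (forall p, (p >= m)%nat -> u p <= c) -> l <= c.
Proof.
  intros Hu Hc. destruct (Rle_dec l c) as [|Hn]; auto. exfalso.
  destruct (Hu (l - c)) as [N HN]. lra.
  specialize (HN (max N m) ltac:(lia)). specialize (Hc (max N m) ltac:(lia)).
  unfold R_dist in HN. apply Rabs_def2 in HN. lra.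
Qed.

Lemma Un_cv_Cmod u l : Un_cv (fun p => Cmod (Csub (u p) l)) 0 -> Un_cv (fun p => Cmod (u p)) (Cmod l).
Proof.
  intros H e He. destruct (H e He) as [N HN]. exists N. intros p Hp.
  specialize (HN p Hp). unfold R_dist in *. rewrite Rminus_0_r, Rabs_right in HN by (apply Rle_ge, Cmod_ge0).
  eapply Rle_lt_trans. apply Cmod_diff. auto.
Qed.

Lemma Un_cv_sumR l (F : nat -> nat -> R) G :
  (forall a, In a l -> Un_cv (fun p => F p a) (G a)) -> Un_cv (fun p => sumR l (F p)) (sumR l G).
Proof.
  induction l; simpl; intros. apply Un_cv_const.
  apply CV_plus; auto.
Qed.

Lemma Nrm_cv r K (Q : nat -> ncseries) L :
  (forall w, good n w = true -> Un_cv (fun p => Cmod (Csub (Q p w) (L w))) 0) ->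
  Un_cv (fun p => Nrm n r K (Q p)) (Nrm n r K L).
Proof.
  revert Q L; induction K; intros Q L H; simpl.
  - apply Un_cv_Cmod. apply H. reflexivity.
  - apply CV_plus. apply Un_cv_Cmod, H. reflexivity.
    apply CV_mult. apply Un_cv_const.
    apply (Un_cv_sumR _ (fun p a => Nrm n r K (shift a (Q p)))). intros a Ha. apply in_seq in Ha.
    apply IHK. intros w Hw. unfold shift. apply H. simpl. rewrite Hw. apply andb_true_intro; split; auto.
    apply Nat.ltb_lt; lia.
Qed.

End S.


Fixpoint Gs (n : nat) (f : nat -> ncseries) (m : nat) : nat -> ncseries :=
  match m with
  | O => Xgen
  | S m' => fun j => ssub (Xgen j) (scomp n m' (f j) (Gs n f m'))
  end.

Fixpoint dg (m : nat) : nat :=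
  match m with O => 1%nat | S m' => S (dg m' + m' * dg m') end.

Lemma step_arith B rho C th k N1 N2 : 0 < B -> 0 < rho -> rho < B -> 2 * C = B - rho ->
  3/4 <= th -> rho / B <= th -> 0 <= N2 ->
  B ^ (S k) * N1 <= rho ^ (S k) * C ->
  (B - rho) * N2 <= (4 * C * th ^ k) * C ->
  N1 + N2 <= 4 * C * th ^ (S k).
Proof.
  intros HB Hr HrB HC Hth Hx HN2 H1 H2.
  assert (HC0 : 0 < C) by lra.
  set (x := rho / B) in *.
  assert (Hx0 : 0 < x) by (unfold x; apply Rdiv_lt_0_compat; lra).
  assert (rho = x * B) by (unfold x; field; lra).
  rewrite H, Rpow_mult_distr in H1.
  assert (HBk : 0 < B ^ S k) by (apply pow_lt; lra).
  assert (N1 <= x ^ S k * C).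
  { apply (Rmult_le_reg_l (B ^ S k)); auto. nra. }
  assert (x ^ S k <= th ^ S k) by (apply pow_incr; lra).
  assert (N2 <= 2 * C * th ^ k).
  { apply (Rmult_le_reg_l (B - rho)). lra. rewrite <- HC. rewrite <- HC in H2.
    replace (2 * C * (2 * C * th ^ k)) with (4 * C * th ^ k * C) by ring. lra. }
  assert (0 <= th ^ k) by (apply pow_le; lra).
  simpl (th ^ S k) in *.
  assert (2 * th ^ k <= 3 * (th * th ^ k)) by nra.
  nra.
Qed.

Section Main.
Variables (n : nat) (f : nat -> ncseries) (A' A B C : R).
Hypothesis HA' : 1 < A'.
Hypothesis HA'A : A' < A.
Hypothesis HAB : A < B.
Hypothesis HCdef : C = (B - A) / 4.
Hypothesis HfB : forall j K, (j < n)%nat -> Nrm n B K (f j) <= C.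
Hypothesis Hfsupp : forall j, (j < n)%nat -> supp n (f j).
Hypothesis HYn : forall j K, (j < n)%nat -> Nrm n A' K (sadd (Xgen j) (f j)) <= A.

Let rho := (A + B) / 2.
Let th := (3 + rho / B) / 4.
Let Y := fun i => sadd (Xgen i) (f i).

Lemma rho_facts : A + C <= rho /\ 2 * C = B - rho /\ 0 < C /\ A' <= rho /\ rho < B.
Proof. unfold rho; rewrite HCdef; repeat split; lra. Qed.

Lemma th_facts : 3/4 <= th /\ th < 1 /\ rho / B <= th /\ 0 < th.
Proof.
  assert (0 < rho / B /\ rho / B < 1).
  { unfold rho; split. apply Rdiv_lt_0_compat; lra.
    apply (Rmult_lt_reg_r B). lra. field_simplify; lra. }
  unfold th; repeat split; lra.
Qed.

Lemma Gs_deg m a : (a < n)%nat -> degle (dg m) (Gs n f m a).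
Proof.
  revert a; induction m; intros a Ha; simpl.
  - apply degle_Xgen.
  - apply degle_sub. apply (degle_mono 1). lia. apply degle_Xgen.
    apply (degle_mono (m * dg m)). lia. apply degle_comp. auto.
Qed.

Lemma Gs_bound m a K : (a < n)%nat -> Nrm n A K (Gs n f m a) <= rho.
Proof.
  destruct rho_facts as [H1 [H2 [H3 [H4 H5]]]].
  revert a; induction m; intros a Ha; simpl.
  - eapply Rle_trans. apply Nrm_Xgen; auto; lra. lra.
  - eapply Rle_trans. apply Nrm_sub; lra.
    assert (Nrm n A K (Xgen a) <= A) by (apply Nrm_Xgen; auto; lra).
    assert (Nrm n A K (scomp n m (f a) (Gs n f m)) <= Nrm n rho m (f a)).
    { apply comp_norm; try lra. intros; apply IHm; auto. }
    assert (Nrm n rho m (f a) <= Nrm n B m (f a)) by (apply Nrm_mono_r; lra).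
    specialize (HfB a m Ha). lra.
Qed.

Lemma Gs_cauchy m a K : (a < n)%nat ->
  Nrm n A K (ssub (Gs n f (S m) a) (Gs n f m a)) <= 4 * C * th ^ m.
Proof.
  destruct rho_facts as [H1 [H2 [H3 [H4 H5]]]]. destruct th_facts as [T1 [T2 [T3 T4]]].
  revert a K; induction m; intros a K Ha.
  - change (Gs n f 1 a) with (ssub (Xgen a) (scomp n 0 (f a) Xgen)). change (Gs n f 0 a) with (Xgen a).
    replace (ssub (ssub (Xgen a) (scomp n 0 (f a) Xgen)) (Xgen a)) with
      (ssub szero (scomp n 0 (f a) Xgen)) by (sext; unfold ssub, szero; ring).
    eapply Rle_trans. apply Nrm_sub; lra. rewrite Nrm_zero.
    assert (Nrm n A K (scomp n 0 (f a) Xgen) <= Nrm n B 0 (f a)).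
    { apply comp_norm; try lra. intros; eapply Rle_trans. apply Nrm_Xgen; auto; lra. lra. }
    specialize (HfB a 0%nat Ha). change (th ^ 0) with 1. lra.
  - change (Gs n f (S (S m)) a) with (ssub (Xgen a) (scomp n (S m) (f a) (Gs n f (S m)))).
    change (Gs n f (S m) a) with (ssub (Xgen a) (scomp n m (f a) (Gs n f m))).
    replace (ssub (ssub (Xgen a) (scomp n (S m) (f a) (Gs n f (S m)))) (ssub (Xgen a) (scomp n m (f a) (Gs n f m))))
      with (ssub (scomp n m (f a) (Gs n f m)) (scomp n (S m) (f a) (Gs n f (S m))))
      by (sext; unfold ssub; ring).
    eapply Rle_trans. apply (Nrm_tri n A K _ (scomp n (S m) (f a) (Gs n f m))). lra.
    apply (step_arith B rho); try lra.
    + apply Nrm_nonneg; lra.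
    + rewrite Nrm_sub_sym. eapply Rle_trans. apply comp_tail with (rho := rho); try lra.
      intros; apply Gs_bound; auto.
      apply Rmult_le_compat_l. apply pow_le; lra. apply HfB; auto.
    + eapply Rle_trans. apply comp_lip with (rho := rho) (delta := 4 * C * th ^ m); try lra.
      assert (0 <= th ^ m) by (apply pow_le; lra). nra.
      intros b Hb. split; [|split]. apply Gs_bound; auto. apply Gs_bound; auto.
      rewrite Nrm_sub_sym. apply IHm; auto.
      apply Rmult_le_compat_l.
      assert (0 <= th ^ m) by (apply pow_le; lra). nra.
      assert (0 <= Nrm n rho (S m) (f a)) by (apply Nrm_nonneg; lra).
      specialize (HfB a (S m) Ha). lra.
Qed.

Definition Hs m a := scomp n (dg m) (Gs n f m a) Y.

Lemma Hs_stab m a D : (a < n)%nat -> (dg m <= D)%nat -> scomp n D (Gs n f m a) Y = Hs m a.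
Proof. intros. unfold Hs. apply comp_stab with (d := dg m); auto. apply Gs_deg; auto. Qed.

Lemma Hs_S m a : (a < n)%nat -> Hs (S m) a = ssub (Y a) (scomp n m (f a) (Hs m)).
Proof.
  intros Ha. unfold Hs at 1. change (Gs n f (S m) a) with (ssub (Xgen a) (scomp n m (f a) (Gs n f m))).
  rewrite comp_sub.
  change (dg (S m)) with (S (dg m + m * dg m)).
  rewrite comp_Xgen by auto. f_equal.
  rewrite (comp_assoc n Y m (f a) (Gs n f m) (dg m)).
  - apply comp_ext_Z. intros b Hb. apply Hs_stab; auto. lia.
  - intros; apply Gs_deg; auto.
  - lia.
Qed.

Lemma Hs_bound m a K : (a < n)%nat -> Nrm n A' K (Hs m a) <= rho.
Proof.
  intros Ha. unfold Hs. eapply Rle_trans. apply comp_norm with (rho := A); try lra.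
  intros; apply HYn; auto. apply Gs_bound; auto.
Qed.

Lemma Hs_err m a K : (a < n)%nat -> Nrm n A' K (ssub (Hs m a) (Xgen a)) <= 4 * C * th ^ m.
Proof.
  destruct rho_facts as [H1 [H2 [H3 [H4 H5]]]]. destruct th_facts as [T1 [T2 [T3 T4]]].
  revert a K; induction m; intros a K Ha.
  - unfold Hs. change (dg 0) with 1%nat. change (Gs n f 0 a) with (Xgen a). rewrite comp_Xgen by auto.
    replace (ssub (Y a) (Xgen a)) with (f a) by (sext; unfold Y, ssub, sadd; ring).
    eapply Rle_trans. apply Nrm_mono_r with (r' := B); lra. specialize (HfB a K Ha). simpl. lra.
  - rewrite Hs_S by auto.
    replace (ssub (ssub (Y a) (scomp n m (f a) (Hs m))) (Xgen a)) with
      (sadd (ssub (f a) (scomp n m (f a) Xgen)) (ssub (scomp n m (f a) Xgen) (scomp n m (f a) (Hs m))))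
      by (sext; unfold Y, ssub, sadd; ring).
    eapply Rle_trans. apply Nrm_add; lra.
    apply (step_arith B rho); try lra.
    + apply Nrm_nonneg; lra.
    + eapply Rle_trans. apply trunc_bound; lra.
      apply Rle_trans with (rho ^ S m * Nrm n B K (f a)).
      apply Rmult_le_compat_r. apply Nrm_nonneg; lra. apply pow_incr; lra.
      apply Rmult_le_compat_l. apply pow_le; lra. apply HfB; auto.
    + eapply Rle_trans. apply comp_lip with (rho := rho) (delta := 4 * C * th ^ m); try lra.
      assert (0 <= th ^ m) by (apply pow_le; lra). nra.
      intros b Hb. split; [|split]. eapply Rle_trans. apply Nrm_Xgen; auto; lra. lra.
      apply Hs_bound; auto.
      rewrite Nrm_sub_sym. apply IHm; auto.
      apply Rmult_le_compat_l.
      assert (0 <= th ^ m) by (apply pow_le; lra). nra.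
      assert (0 <= Nrm n rho m (f a)) by (apply Nrm_nonneg; lra).
      specialize (HfB a m Ha). lra.
Qed.

Let M := 4 * C / (1 - th).

Lemma Gs_cauchy2 m k a K : (a < n)%nat ->
  Nrm n A K (ssub (Gs n f (m + k) a) (Gs n f m a)) <= M * (th ^ m - th ^ (m + k)).
Proof.
  destruct th_facts as [T1 [T2 [T3 T4]]].
  intros Ha. induction k.
  - rewrite Nat.add_0_r. replace (ssub (Gs n f m a) (Gs n f m a)) with szero by (sext; unfold ssub, szero; ring).
    rewrite Nrm_zero. lra.
  - eapply Rle_trans. apply (Nrm_tri n A K _ (Gs n f (m + k) a)). lra.
    rewrite Nat.add_succ_r. pose proof (Gs_cauchy (m + k) a K Ha).
    replace (M * (th ^ m - th ^ S (m + k))) with (M * (th ^ m - th ^ (m + k)) + 4 * C * th ^ (m + k)).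
    lra. unfold M. simpl. field. lra.
Qed.

Lemma Gs_cauchy3 m p a K : (a < n)%nat -> (m <= p)%nat ->
  Nrm n A K (ssub (Gs n f p a) (Gs n f m a)) <= M * th ^ m.
Proof.
  destruct th_facts as [T1 [T2 [T3 T4]]].
  intros Ha Hp. replace p with (m + (p - m))%nat by lia.
  eapply Rle_trans. apply Gs_cauchy2; auto.
  assert (0 <= th ^ (m + (p - m))) by (apply pow_le; lra).
  assert (0 <= M) by (unfold M; destruct rho_facts as [_ [_ [HH _]]]; apply Rmult_le_pos; [lra| apply Rlt_le, Rinv_0_lt_compat; lra]).
  nra.
Qed.

Lemma main_exists : exists G : nat -> ncseries,
  (forall j, (j < n)%nat -> in_alg n A (G j)) /\
  (forall j, (j < n)%nat -> forall w : list nat,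
     Ccv (eval_partial n (G j) (fun i => sadd (Xgen i) (f i)) w) (Xgen j w)).
Proof.
  destruct rho_facts as [H1 [H2 [H3 [H4 H5]]]]. destruct th_facts as [T1 [T2 [T3 T4]]].
  assert (HM : 0 < M) by (unfold M; apply Rmult_lt_0_compat; [lra| apply Rinv_0_lt_compat; lra]).
  assert (Hth : Rabs th < 1) by (rewrite Rabs_right; lra).
  assert (Hlim : forall a w, {z : Cplx | (a < n)%nat -> good n w = true ->
            Un_cv (fun m => Cmod (Csub (Gs n f m a w) z)) 0}).
  { intros a w. destruct (lt_dec a n) as [Ha|Ha]; [|exists Defs.C0; intros; contradiction].
    destruct (good n w) eqn:Eg; [|exists Defs.C0; intros; discriminate].
    assert (Hc : forall m p, (m <= p)%nat -> Cmod (Csub (Gs n f p a w) (Gs n f m a w)) <= M * th ^ m).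
    { intros m p Hmp. eapply Rle_trans.
      apply (Nrm_coef n A (length w) (ssub (Gs n f p a) (Gs n f m a)) w); auto; lra.
      apply Gs_cauchy3; auto. }
    assert (Hcs : forall proj : Cplx -> R, (forall z, Rabs (proj z) <= Cmod z) ->
              (forall z1 z2, proj (Csub z1 z2) = proj z1 - proj z2) ->
              Cauchy_crit (fun m => proj (Gs n f m a w))).
    { intros proj Hp1 Hp2 eps Heps.
      destruct (pow_lt_1_zero th Hth (eps / M)) as [N HN].
      apply Rdiv_lt_0_compat; lra.
      exists N. intros p q Hp Hq. unfold R_dist. rewrite <- Hp2.
      eapply Rle_lt_trans. apply Hp1.
      destruct (le_dec q p).
      - eapply Rle_lt_trans. apply Hc; auto.
        specialize (HN q Hq). rewrite Rabs_right in HN by (apply Rle_ge, pow_le; lra).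
        apply (Rmult_lt_compat_l M) in HN; auto. replace (M * (eps / M)) with eps in HN by (field; lra). lra.
      - rewrite Cmod_sub_sym. eapply Rle_lt_trans. apply Hc; lia.
        specialize (HN p Hp). rewrite Rabs_right in HN by (apply Rle_ge, pow_le; lra).
        apply (Rmult_lt_compat_l M) in HN; auto. replace (M * (eps / M)) with eps in HN by (field; lra). lra. }
    destruct (R_complete _ (Hcs fst Cmod_fst (fun _ _ => eq_refl))) as [l1 Hl1].
    destruct (R_complete _ (Hcs snd Cmod_snd (fun _ _ => eq_refl))) as [l2 Hl2].
    exists (l1, l2). intros _ _ eps Heps.
    destruct (Hl1 (eps / 2)) as [N1 HN1]. lra. destruct (Hl2 (eps / 2)) as [N2 HN2]. lra.
    exists (max N1 N2). intros p Hp. unfold R_dist. rewrite Rminus_0_r, Rabs_right by (apply Rle_ge, Cmod_ge0).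
    eapply Rle_lt_trans. apply Cmod_le_fs. simpl.
    specialize (HN1 p ltac:(lia)). specialize (HN2 p ltac:(lia)). unfold R_dist in *. lra. }
  pose (Gl := fun a w => if good n w then proj1_sig (Hlim a w) else Defs.C0).
  assert (HGl : forall a w, (a < n)%nat -> good n w = true ->
            Un_cv (fun m => Cmod (Csub (Gs n f m a w) (Gl a w))) 0).
  { intros a w Ha Hw. unfold Gl. destruct (Hlim a w) as [z Hz]. simpl. rewrite Hw. apply Hz; auto. }
  assert (HGd : forall a m K, (a < n)%nat -> Nrm n A K (ssub (Gl a) (Gs n f m a)) <= M * th ^ m).
  { intros a m K Ha.
    apply (Un_cv_le (fun p => Nrm n A K (ssub (Gs n f p a) (Gs n f m a))) _ m).
    - apply Nrm_cv. intros w Hw. unfold ssub.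
      replace (fun p => Cmod (Csub (Csub (Gs n f p a w) (Gs n f m a w)) (Csub (Gl a w) (Gs n f m a w))))
        with (fun p => Cmod (Csub (Gs n f p a w) (Gl a w))).
      apply HGl; auto.
      apply functional_extensionality; intro p. f_equal. ring.
    - intros p Hp. apply Gs_cauchy3; auto. }
  assert (HYs : forall a, (a < n)%nat -> supp n (Y a)).
  { intros. unfold Y. apply supp_sadd. apply supp_Xgen; auto. apply Hfsupp; auto. }
  exists Gl. split.
  - intros j Hj. split.
    + intros w Hw. unfold Gl. destruct (Hlim j w) as [z Hz]. simpl. destruct (good n w) eqn:E; auto. exfalso; apply Hw; apply good_Forall; auto.
    + exists (M + rho). intros K. rewrite norm_partial_Nrm.
      replace (Gl j) with (sadd (ssub (Gl j) (Gs n f 0 j)) (Gs n f 0 j)) by (sext; unfold sadd, ssub; ring).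
      eapply Rle_trans. apply Nrm_add; lra.
      pose proof (HGd j 0%nat K Hj). pose proof (Gs_bound 0 j K Hj).
      change (th ^ 0) with 1 in *. lra.
  - intros j Hj w. unfold Ccv.
    assert (Hev : forall K, eval_partial n (Gl j) (fun i => sadd (Xgen i) (f i)) w K = scomp n K (Gl j) Y w)
      by (intros; rewrite scomp_eval; reflexivity).
    destruct (good n w) eqn:Eg.
    + intros eps Heps.
      destruct (pow_lt_1_zero th Hth (eps / (M + 4 * C))) as [m Hm].
      apply Rdiv_lt_0_compat; lra.
      specialize (Hm m (le_n m)). rewrite Rabs_right in Hm by (apply Rle_ge, pow_le; lra).
      exists (dg m). intros K HK. unfold R_dist. rewrite Hev, Rminus_0_r, Rabs_right by (apply Rle_ge, Cmod_ge0).
      assert (E : Csub (scomp n K (Gl j) Y w) (Xgen j w) =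
                  Cadd (scomp n K (ssub (Gl j) (Gs n f m j)) Y w) (Csub (Hs m j w) (Xgen j w))).
      { rewrite comp_sub. rewrite Hs_stab by (auto; lia). unfold ssub. ring. }
      rewrite E. eapply Rle_lt_trans. apply Cmod_add.
      assert (Cmod (scomp n K (ssub (Gl j) (Gs n f m j)) Y w) <= M * th ^ m).
      { eapply Rle_trans. apply (Nrm_coef n A' (length w)); auto; lra.
        eapply Rle_trans. apply comp_norm with (rho := A); try lra.
        intros; apply HYn; auto.
        apply HGd; auto. }
      assert (Cmod (Csub (Hs m j w) (Xgen j w)) <= 4 * C * th ^ m).
      { eapply Rle_trans. apply (Nrm_coef n A' (length w) (ssub (Hs m j) (Xgen j))); auto; lra.
        apply Hs_err; auto. }
      apply (Rmult_lt_compat_l (M + 4 * C)) in Hm. 2: lra.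
      replace ((M + 4 * C) * (eps / (M + 4 * C))) with eps in Hm by (field; lra). lra.
    + intros eps Heps. exists 0%nat. intros K _. rewrite Hev. unfold R_dist.
      rewrite (supp_scomp n K (Gl j) Y HYs w Eg).
      rewrite (supp_Xgen n j Hj w Eg).
      replace (Csub Defs.C0 Defs.C0) with Defs.C0 by ring. rewrite Cmod_C0, Rminus_0_r, Rabs_R0. auto.
Qed.

End Main.


Theorem mainTheorem2 :
  forall A' A B : R, 1 < A' -> A' < A -> A < B ->
  exists C : R, 0 < C /\
  forall (n : nat) (f : nat -> ncseries),
    (forall j, (j < n)%nat -> in_alg n B (f j) /\ norm_lt n B (f j) C) ->
    (forall j, (j < n)%nat -> norm_le n A' (sadd (Xgen j) (f j)) A) ->
    exists G : nat -> ncseries,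
      (forall j, (j < n)%nat -> in_alg n A (G j)) /\
      (forall j, (j < n)%nat -> forall w : list nat,
         Ccv (eval_partial n (G j) (fun i => sadd (Xgen i) (f i)) w) (Xgen j w)).
Proof.
  intros A' A B H1 H2 H3. exists ((B - A) / 4). split. lra.
  intros n f Hf HY.
  apply (main_exists n f A' A B ((B - A) / 4)); auto.
  - intros j K Hj. destruct (Hf j Hj) as [_ [c' [Hc' Hle]]]. specialize (Hle K).
    rewrite norm_partial_Nrm in Hle. lra.
  - intros j Hj w Hw. destruct (Hf j Hj) as [[Hs _] _]. apply Hs. intro HF.
    apply good_Forall in HF. congruence.
  - intros j K Hj. rewrite <- norm_partial_Nrm. apply HY; auto.
Qed.
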